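(* Let $P_S,H_{SR},H_{SD},H_{RD},\sigma_R^2,\sigma_D^2>0$ and $\eta\in(0,1]$. Set $C_{SR}=\log(1+P_SH_{SR}/\sigma_R^2)$, $m=P_SH_{SD}/\sigma_D^2$, $C_{SD}=b=\log(1+m)$, $a=C_{SR}-C_{SD}$, $c=\eta H_{SR}H_{RD}P_S/\sigma_D^2$, and assume $a>0$. Let $$f_2(\lambda)=\lambda b+(1-\lambda)\log\Big(1+m+\frac{c\lambda}{1-\lambda}\Big),\quad\lambda\in(0,1),$$ and consider $\max_{\lambda\in(0,1)}\min\{\lambda C_{SR},f_2(\lambda)\}$. Then: (i) the equation $\lambda C_{SR}=f_2(\lambda)$ has exactly one solution $\lambda_1\in(0,1)$, namely $$\lambda_1=\frac{-\frac1a\mathcal W_{-1}\!\big(-\frac{a}{c}e^{-\frac{a(1+m)}{c}}\big)-\frac{1+m}{c}}{1-\frac1a\mathcal W_{-1}\!\big(-\frac{a}{c}e^{-\frac{a(1+m)}{c}}\big)-\frac{1+m}{c}};$$ (ii) $f_2$ has exactly one stationary point $\lambda_2\in(0,1)$, namely $$\lambda_2=\frac{e^{\mathcal W_0\left(\frac{c-(1+m)}{e^{1+b}}\right)+b+1}-(1+m)}{e^{\mathcal W_0\left(\frac{c-(1+m)}{e^{1+b}}\right)+b+1}+c-(1+m)};$$ (iii) $\lambda^*=\max\{\lambda_1,\lambda_2\}$ attains the maximum of $\min\{\lambda C_{SR},f_2(\lambda)\}$ over $\lambda\in(0,1)$.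
   Context: $\log$ is the natural logarithm. $\mathcal W_0$ and $\mathcal W_{-1}$ denote the principal and the lower real branches of the Lambert W function (real solutions $w$ of $we^w=x$ with $w\ge-1$, resp. $w\le-1$). This is the optimal time-fraction problem for the ''ideal'' energy-harvesting relay protocol with energy accumulation (maximal ratio combining) at the destination, where the relay forwarding power is $\eta H_{SR}P_S\lambda/(1-\lambda)$. *)

(* Defs.v *)
From Stdlib Require Import Reals ClassicalEpsilon.
Open Scope R_scope.

(* Chosen by Hilbert's epsilon; on the domain of the
   branch the solution is unique, so this is exactly the paper's function.
   Outside the domain the value is an unspecified real. *)
Definition LambertW0 (x : R) : R :=
  epsilon (inhabits 0) (fun w => -1 <= w /\ w * exp w = x).

Definition LambertWm1 (x : R) : R :=
  epsilon (inhabits 0) (fun w => w <= -1 /\ w * exp w = x).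

Definition f2 (b m c lam : R) : R :=
  lam * b + (1 - lam) * ln (1 + m + c * lam / (1 - lam)).

(* Main.v *)
Require Import Defs.
From Stdlib Require Import Reals Lra ClassicalEpsilon.
From Coquelicot Require Import Coquelicot.
Open Scope R_scope.

Lemma f2_deriv b m c l : 0 < m -> 0 < c -> 0 < l < 1 ->
  derivable_pt_lim (f2 b m c) l
   (b - ln (1 + m + c * l / (1 - l)) + 1 + (c - 1 - m) / (1 + m + c * l / (1 - l))).
Proof.
  intros Hm Hc Hl.
  assert (HX : 0 < 1 + m + c * l / (1 - l)).
  { assert (0 < c * l / (1 - l)) by (apply Rdiv_lt_0_compat; nra). lra. }
  apply is_derive_Reals. unfold f2.
  auto_derive.
  - split; [intro; lra|]. split; [|exact I]. revert HX; unfold Rdiv, Rminus; auto.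
  - change (1 + m + c * l * / (1 + - l)) with (1+m+c*l/(1-l)).
    set (LX := ln _). field. split; intro; nra.
Qed.

Lemma ln_le1 y : 0 < y -> ln y <= y - 1.
Proof. intro H. pose proof (exp_ineq1_le (ln y)). rewrite exp_ln in H0; lra. Qed.

Lemma wexp_mono w w' : w < w' -> w' <= -1 -> w' * exp w' < w * exp w.
Proof.
  intros H1 H2. set (d := w' - w).
  assert (Hd : 0 < d) by (unfold d; lra).
  assert (He : exp w' = exp w * exp d) by (rewrite <- exp_plus; f_equal; unfold d; ring).
  pose proof (exp_ineq1 d ltac:(lra)).
  pose proof (exp_pos w).
  assert (w' * exp d < w' * (1 + d)) by (apply Rmult_lt_gt_compat_neg_l; lra).
  assert (w' * (1+d) <= w) by (unfold d in *; nra).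
  rewrite He. nra.
Qed.

Lemma wexp_inj w w' : w <= -1 -> w' <= -1 -> w * exp w = w' * exp w' -> w = w'.
Proof.
  intros H1 H2 H3. destruct (Rtotal_order w w') as [H|[H|H]]; auto.
  - pose proof (wexp_mono w w' H H2). lra.
  - pose proof (wexp_mono w' w H H1). lra.
Qed.

Lemma cont_of_deriv f : (forall x, exists l, derivable_pt_lim f x l) -> continuity f.
Proof.
  intros H x. destruct (H x) as [l Hl]. apply derivable_continuous_pt. exists l. exact Hl.
Qed.

Definition Xf (m c l : R) := 1 + m + c * l / (1 - l).
Definition Dx (b m c X : R) := b - ln X + 1 + (c - 1 - m) / X.

Lemma Xf_gt m c l : 0 < m -> 0 < c -> 0 < l < 1 -> 1 + m < Xf m c l.
Proof. intros. unfold Xf. assert (0 < c * l / (1 - l)) by (apply Rdiv_lt_0_compat; nra). lra. Qed.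

Lemma Xf_mono m c l l' : 0 < c -> 0 < l -> l < l' -> l' < 1 -> Xf m c l < Xf m c l'.
Proof.
  intros Hc H1 H2 H3. unfold Xf.
  set (u := l / (1 - l)). set (u' := l' / (1 - l')).
  assert (E1 : c * l / (1 - l) = c * u) by (unfold u; field; lra).
  assert (E2 : c * l' / (1 - l') = c * u') by (unfold u'; field; lra).
  assert (F1 : u * (1 - l) = l) by (unfold u; field; lra).
  assert (F2 : u' * (1 - l') = l') by (unfold u'; field; lra).
  assert (0 < u') by (unfold u'; apply Rdiv_lt_0_compat; lra).
  assert (u < u').
  { destruct (Rlt_or_le u u') as [h|h]; auto.
    assert (u' * (1 - l) <= u * (1 - l)) by (apply Rmult_le_compat_r; lra).
    assert (u' * (1 - l') < u' * (1 - l)) by (apply Rmult_lt_compat_l; lra). lra. }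
  rewrite E1, E2. assert (c * u < c * u') by (apply Rmult_lt_compat_l; lra). lra.
Qed.

Lemma Dx_mono b m c X X' : 0 < m -> 0 < c -> 1 + m < X -> X < X' -> Dx b m c X' < Dx b m c X.
Proof.
  intros Hm0 Hc H1 H2. unfold Dx.
  assert (Hm : 0 < X) by lra.
  pose proof (ln_le1 (X / X') ltac:(apply Rdiv_lt_0_compat; lra)).
  rewrite ln_div in H by lra.
  assert (Hid : 1 - X / X' - (c - 1 - m) / X' + (c - 1 - m) / X = (X' - X) * (X + (c - 1 - m)) / (X * X'))
    by (field; lra).
  assert (0 < (X' - X) * (X + (c - 1 - m)) / (X * X')).
  { apply Rdiv_lt_0_compat; apply Rmult_lt_0_compat; lra. }
  lra.
Qed.

Lemma tangent b m c l l0 : 0 < m -> 0 < c -> 0 < l < 1 -> 0 < l0 < 1 ->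
  f2 b m c l <= f2 b m c l0 + Dx b m c (Xf m c l0) * (l - l0).
Proof.
  intros Hm Hc Hl Hl0.
  pose proof (Xf_gt m c l Hm Hc Hl). pose proof (Xf_gt m c l0 Hm Hc Hl0).
  pose proof (ln_le1 (Xf m c l / Xf m c l0) ltac:(apply Rdiv_lt_0_compat; lra)).
  rewrite ln_div in H1 by lra.
  assert (f2 b m c l <= l * b + (1 - l) * (ln (Xf m c l0) + Xf m c l / Xf m c l0 - 1)).
  { assert (ln (Xf m c l) <= ln (Xf m c l0) + Xf m c l / Xf m c l0 - 1) by lra.
    unfold f2. change (1 + m + c * l / (1 - l)) with (Xf m c l).
    apply Rplus_le_compat_l; apply Rmult_le_compat_l; lra. }
  assert (l * b + (1 - l) * (ln (Xf m c l0) + Xf m c l / Xf m c l0 - 1) =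
          f2 b m c l0 + Dx b m c (Xf m c l0) * (l - l0)).
  { unfold f2, Dx. fold (Xf m c l0). set (L0 := ln (Xf m c l0)).
    unfold Xf. field. repeat split; intro; nra. }
  lra.
Qed.

Lemma key_gt a m c t1 : 0 < a -> 0 < c -> 0 < m -> 0 < t1 ->
  exp (a * t1) = 1 + m + c * t1 -> c < a * exp (a * t1).
Proof.
  intros Ha Hc Hm Ht He.
  pose proof (exp_ineq1_le (- (a * t1))).
  assert (Hp : exp (a * t1) * exp (- (a * t1)) = 1)
    by (rewrite <- exp_plus; replace (a * t1 + - (a * t1)) with 0 by ring; apply exp_0).
  pose proof (exp_pos (a * t1)).
  assert (exp (a * t1) * (1 + - (a * t1)) <= 1) by (rewrite <- Hp; apply Rmult_le_compat_l; lra).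
  assert ((a * exp (a * t1) - c) * t1 > 0) by nra.
  destruct (Rlt_or_le c (a * exp (a * t1))) as [h|h]; auto.
  assert ((a * exp (a * t1) - c) * t1 <= 0) by (apply Rmult_le_0_r; lra). lra.
Qed.

Lemma side_gt a m c t1 t : 0 < a -> 0 < c -> 0 < m -> 0 < t1 ->
  exp (a * t1) = 1 + m + c * t1 -> t1 < t -> 1 + m + c * t < exp (a * t).
Proof.
  intros Ha Hc Hm Ht He Htt.
  pose proof (key_gt a m c t1 Ha Hc Hm Ht He).
  assert (Hs : exp (a * t) = exp (a * t1) * exp (a * (t - t1)))
    by (rewrite <- exp_plus; f_equal; ring).
  pose proof (exp_ineq1 (a * (t - t1)) ltac:(intro; nra)).
  pose proof (exp_pos (a * t1)).
  assert (exp (a * t1) * (1 + a * (t - t1)) < exp (a * t1) * exp (a * (t - t1)))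
    by (apply Rmult_lt_compat_l; lra).
  assert (c * (t - t1) < a * exp (a * t1) * (t - t1)) by (apply Rmult_lt_compat_r; lra).
  nra.
Qed.

Lemma side_lt a m c t1 t : 0 < a -> 0 < c -> 0 < m -> 0 < t1 ->
  exp (a * t1) = 1 + m + c * t1 -> 0 <= t -> t < t1 -> exp (a * t) < 1 + m + c * t.
Proof.
  intros Ha Hc Hm Ht He Ht0 Htt.
  set (M := a * t). set (eM := exp M).
  assert (Hp : eM * exp (- M) = 1)
    by (unfold eM; rewrite <- exp_plus; replace (M + - M) with 0 by ring; apply exp_0).
  pose proof (exp_ineq1_le (- M)).
  assert (HeM : 0 < eM) by apply exp_pos.
  assert (h1 : eM * (1 - M) <= 1) by (rewrite <- Hp; apply Rmult_le_compat_l; lra).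
  assert (Hs : exp (a * t1) = eM * exp (a * t1 - M))
    by (unfold eM; rewrite <- exp_plus; f_equal; ring).
  pose proof (exp_ineq1_le (a * t1 - M)).
  assert (h2 : eM * (1 + (a * t1 - M)) <= exp (a * t1)) by (rewrite Hs; apply Rmult_le_compat_l; lra).
  assert (h3 : (t1 - t) * (eM * (1 - M)) + t * (eM * (1 + (a * t1 - M))) <= (t1 - t) * 1 + t * exp (a * t1)).
  { apply Rplus_le_compat; apply Rmult_le_compat_l; lra. }
  assert (h4 : (t1 - t) * (eM * (1 - M)) + t * (eM * (1 + (a * t1 - M))) = t1 * eM) by (unfold M; ring).
  rewrite h4, He in h3.
  assert (t1 * eM < t1 * (1 + m + c * t)) by nra.
  apply Rmult_lt_reg_l with t1; lra.
Qed.

Lemma exist_t1 a m c : 0 < a -> 0 < c -> 0 < m ->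
  exists t1, 0 < t1 /\ exp (a * t1) = 1 + m + c * t1.
Proof.
  intros Ha Hc Hm.
  set (g := fun t => exp (a * t) - (1 + m + c * t)).
  assert (Hg : continuity g).
  { apply cont_of_deriv. intro x. eexists. apply is_derive_Reals. unfold g. auto_derive; [exact I|reflexivity]. }
  set (q := c / a). set (K := q + m + 1). set (T := 4 * K / a).
  assert (Hq : 0 < q) by (unfold q; apply Rdiv_lt_0_compat; lra).
  assert (HaT : a * T = 4 * K) by (unfold T; field; lra).
  assert (HcT : c * T = 4 * K * q) by (unfold T, q; field; lra).
  assert (HK : 0 < K) by (unfold K; lra).
  assert (HT : 0 < T) by (unfold T; apply Rdiv_lt_0_compat; lra).
  assert (Hx : exp (4 * K) = exp (2 * K) * exp (2 * K)) by (rewrite <- exp_plus; f_equal; ring).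
  pose proof (exp_ineq1_le (2 * K)).
  assert (Hg0 : g 0 < 0) by (unfold g; rewrite Rmult_0_r, exp_0; lra).
  assert (HgT : 0 < g T).
  { unfold g. rewrite HaT, HcT, Hx.
    assert ((1 + 2 * K) * (1 + 2 * K) <= exp (2 * K) * exp (2 * K)) by (apply Rmult_le_compat; lra).
    unfold K in *. nra. }
  destruct (IVT g 0 T Hg HT Hg0 HgT) as [z [Hz1 Hz2]].
  exists z. split.
  - destruct (Req_dec z 0) as [h|h]; [subst; lra|lra].
  - unfold g in Hz2. lra.
Qed.

Lemma exist_W0 z0 : - exp (-1) < z0 -> exists v, -1 <= v /\ v * exp v = z0.
Proof.
  intros Hz.
  set (k := fun v => v * exp v - z0).
  assert (Hk : continuity k).
  { apply cont_of_deriv. intro x. eexists. apply is_derive_Reals. unfold k. auto_derive; [exact I|reflexivity]. }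
  set (U := Rabs z0 + 1).
  assert (HU : -1 < U) by (unfold U; pose proof (Rabs_pos z0); lra).
  assert (Hk1 : k (-1) < 0) by (unfold k; lra).
  assert (HkU : 0 < k U).
  { unfold k. pose proof (exp_ineq1_le U). pose proof (Rle_abs z0). pose proof (Rabs_pos z0).
    assert (U * 1 <= U * exp U) by (apply Rmult_le_compat_l; unfold U in *; lra).
    unfold U in *; lra. }
  destruct (IVT k (-1) U Hk HU Hk1 HkU) as [v [Hv1 Hv2]].
  exists v. split; [lra|]. unfold k in Hv2. lra.
Qed.

Lemma main (CSR m b a c : R) : 0 < m -> 0 < c -> b = ln (1 + m) -> a = CSR - b -> 0 < a ->
  let W1 := LambertWm1 (- (a / c) * exp (- (a * (1 + m) / c))) in
  let lam1 := (- (1 / a) * W1 - (1 + m) / c) / (1 - (1 / a) * W1 - (1 + m) / c) in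
  let E := exp (LambertW0 ((c - (1 + m)) / exp (1 + b)) + b + 1) in
  let lam2 := (E - (1 + m)) / (E + c - (1 + m)) in
  let lamstar := Rmax lam1 lam2 in
  (0 < lam1 < 1 /\ lam1 * CSR = f2 b m c lam1 /\
   forall l, 0 < l < 1 -> l * CSR = f2 b m c l -> l = lam1) /\
  (0 < lam2 < 1 /\ derivable_pt_lim (f2 b m c) lam2 0 /\
   forall l, 0 < l < 1 -> derivable_pt_lim (f2 b m c) l 0 -> l = lam2) /\
  (0 < lamstar < 1 /\
   forall l, 0 < l < 1 ->
     Rmin (l * CSR) (f2 b m c l) <= Rmin (lamstar * CSR) (f2 b m c lamstar)).
Proof.
  intros Hm Hc Hb Hae Ha W1 lam1 E lam2 lamstar.
  assert (HC : CSR = a + b) by lra.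
  assert (Hbp : 0 < b) by (rewrite Hb, <- ln_1; apply ln_increasing; lra).
  destruct (exist_t1 a m c Ha Hc Hm) as [t1 [Ht1 He1]].
  pose proof (key_gt a m c t1 Ha Hc Hm Ht1 He1) as Hkey.
  set (E1 := exp (a * t1)) in *.
  set (w := - (a / c) * E1).
  assert (Hw : w < -1).
  { assert (Hr : a / c * E1 * c = a * E1) by (field; lra).
    assert (1 < a / c * E1) by nra. unfold w. lra. }
  assert (Hexpw : exp w = exp (- (a * (1 + m) / c)) * exp (- (a * t1))).
  { rewrite <- exp_plus. f_equal. unfold w. rewrite He1. field. lra. }
  assert (HE1i : E1 * exp (- (a * t1)) = 1).
  { unfold E1. rewrite <- exp_plus. replace (a * t1 + - (a * t1)) with 0 by ring. apply exp_0. }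
  assert (Hwe : w * exp w = - (a / c) * exp (- (a * (1 + m) / c))).
  { rewrite Hexpw. unfold w.
    replace (- (a / c) * E1 * (exp (- (a * (1 + m) / c)) * exp (- (a * t1))))
      with (- (a / c) * exp (- (a * (1 + m) / c)) * (E1 * exp (- (a * t1)))) by ring.
    rewrite HE1i. ring. }
  assert (HW1 : W1 = w).
  { assert (HW : W1 <= -1 /\ W1 * exp W1 = - (a / c) * exp (- (a * (1 + m) / c))).
    { unfold W1, LambertWm1. apply epsilon_spec. exists w. split; [lra|exact Hwe]. }
    apply wexp_inj; [tauto|lra|]. rewrite Hwe. tauto. }
  assert (Hlam1 : lam1 = t1 / (1 + t1)).
  { unfold lam1. rewrite HW1. unfold w. rewrite He1. assert (0 < a*c*(1+t1)) by (apply Rmult_lt_0_compat; [apply Rmult_lt_0_compat|]; lra).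
    field. repeat split; intro; nra. }
  assert (Hl1r : lam1 * (1 + t1) = t1) by (rewrite Hlam1; field; lra).
  assert (Hl1 : 0 < lam1 < 1).
  { rewrite Hlam1. split; [apply Rdiv_lt_0_compat; lra|].
    apply Rmult_lt_reg_r with (1 + t1); [lra|]. unfold Rdiv. rewrite Rmult_assoc, Rinv_l; lra. }
  assert (Hdiff : forall l, 0 < l < 1 ->
    f2 b m c l - l * CSR = (1 - l) * (ln (1 + m + c * (l / (1 - l))) - a * (l / (1 - l)))).
  { intros l Hl. unfold f2. rewrite HC.
    replace (c * l / (1 - l)) with (c * (l / (1 - l))) by (field; lra).
    set (L := ln _). field. lra. }
  assert (Hsgt : forall l, 0 < l < 1 -> lam1 < l -> f2 b m c l < l * CSR).
  { intros l Hl Hll. pose proof (Hdiff l Hl). set (t := l / (1 - l)) in *.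
    assert (Ht : t * (1 - l) = l) by (unfold t; field; lra).
    assert (t1 < t) by nra.
    pose proof (side_gt a m c t1 t Ha Hc Hm Ht1 He1 H0).
    assert (ln (1 + m + c * t) < a * t).
    { rewrite <- (ln_exp (a * t)). apply ln_increasing; [|exact H1].
      assert (0 < t) by nra. nra. }
    assert ((1 - l) * (ln (1 + m + c * t) - a * t) < 0) by (apply Rmult_lt_0_compat_l_neg; lra) || nra.
    lra. }
  assert (Hslt : forall l, 0 < l < 1 -> l < lam1 -> l * CSR < f2 b m c l).
  { intros l Hl Hll. pose proof (Hdiff l Hl). set (t := l / (1 - l)) in *.
    assert (Ht : t * (1 - l) = l) by (unfold t; field; lra).
    assert (0 < t) by nra.
    assert (t < t1) by nra.
    pose proof (side_lt a m c t1 t Ha Hc Hm Ht1 He1 ltac:(lra) H1).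
    assert (a * t < ln (1 + m + c * t)).
    { rewrite <- (ln_exp (a * t)). apply ln_increasing; [apply exp_pos|exact H2]. }
    assert (0 < (1 - l) * (ln (1 + m + c * t) - a * t)) by (apply Rmult_lt_0_compat; lra).
    lra. }
  assert (Heq1 : lam1 * CSR = f2 b m c lam1).
  { pose proof (Hdiff lam1 Hl1).
    assert (Ht : lam1 / (1 - lam1) = t1) by (rewrite Hlam1; field; split; lra).
    rewrite Ht, <- He1 in H. unfold E1 in H. rewrite ln_exp in H. lra. }
  split; [split; [exact Hl1|split; [exact Heq1|]]|].
  { intros l Hl Heq. destruct (Rtotal_order l lam1) as [h|[h|h]]; auto.
    - pose proof (Hslt l Hl h). lra.
    - pose proof (Hsgt l Hl h). lra. }
  set (z0 := (c - (1 + m)) / exp (1 + b)) in *.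
  assert (He1b : exp (1 + b) = exp 1 * (1 + m)) by (rewrite exp_plus, Hb, exp_ln; lra).
  assert (Hee : exp (-1) * exp 1 = 1)
    by (rewrite <- exp_plus; replace (-1 + 1) with 0 by ring; apply exp_0).
  assert (Hex1 : 0 < exp 1) by apply exp_pos.
  assert (Hz0e : z0 * (exp 1 * (1 + m)) = c - 1 - m) by (unfold z0; rewrite He1b; field; split; lra).
  assert (Hz0 : - exp (-1) < z0).
  { assert (- exp (-1) * (exp 1 * (1 + m)) < z0 * (exp 1 * (1 + m))).
    { rewrite Hz0e. replace (- exp (-1) * (exp 1 * (1 + m))) with (- (exp (-1) * exp 1) * (1 + m)) by ring.
      rewrite Hee. lra. }
    apply Rmult_lt_reg_r with (exp 1 * (1 + m)); [apply Rmult_lt_0_compat; lra | exact H]. }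
  set (V := LambertW0 z0) in *.
  assert (HV : -1 <= V /\ V * exp V = z0).
  { unfold V, LambertW0. apply epsilon_spec. apply exist_W0. exact Hz0. }
  destruct HV as [HV1 HV2].
  assert (HV3 : -1 < V).
  { destruct (Req_dec V (-1)) as [h|h]; [|lra]. rewrite h in HV2. lra. }
  assert (HEd : E = exp V * exp 1 * (1 + m)).
  { unfold E. rewrite exp_plus, exp_plus, Hb, exp_ln by lra. ring. }
  assert (HV1e : 1 < exp V * exp 1).
  { rewrite <- exp_plus. pose proof (exp_increasing 0 (V + 1) ltac:(lra)) as H0. rewrite exp_0 in H0. exact H0. }
  assert (HEm : 1 + m < E) by (rewrite HEd; nra).
  assert (HEv : c - 1 - m = V * E) by (rewrite HEd, <- Hz0e, <- HV2; ring).
  assert (HlnE : ln E = V + b + 1) by (unfold E; apply ln_exp).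
  assert (Hl2 : 0 < lam2 < 1).
  { unfold lam2. split; [apply Rdiv_lt_0_compat; lra|].
    apply Rmult_lt_reg_r with (E + c - (1 + m)); [lra|]. unfold Rdiv. rewrite Rmult_assoc, Rinv_l; lra. }
  assert (HX2 : Xf m c lam2 = E).
  { unfold Xf, lam2. field. repeat split; intro; lra. }
  assert (HD2 : Dx b m c E = 0).
  { unfold Dx. rewrite HlnE, HEv. field. lra. }
  assert (Hder : forall l, 0 < l < 1 -> derivable_pt_lim (f2 b m c) l (Dx b m c (Xf m c l))).
  { intros l Hl. apply f2_deriv; auto. }
  assert (Hd2 : derivable_pt_lim (f2 b m c) lam2 0).
  { rewrite <- HD2, <- HX2. apply Hder; auto. }
  assert (Huniq2 : forall l, 0 < l < 1 -> derivable_pt_lim (f2 b m c) l 0 -> l = lam2).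
  { intros l Hl Hd.
    pose proof (uniqueness_limite _ _ _ _ Hd (Hder l Hl)) as H0.
    pose proof (Xf_gt m c l Hm Hc Hl) as HXl.
    assert (HXE : Xf m c l = E).
    { destruct (Rtotal_order (Xf m c l) E) as [h|[h|h]]; auto.
      - pose proof (Dx_mono b m c _ _ Hm Hc HXl h). lra.
      - pose proof (Dx_mono b m c _ _ Hm Hc HEm h). lra. }
    unfold Xf in HXE.
    assert (Hq : c * l = (E - 1 - m) * (1 - l)).
    { replace (c * l) with (c * l / (1 - l) * (1 - l)) by (field; lra). rewrite <- HXE. ring. }
    assert (Hq2 : E - (1 + m) = l * (E + c - (1 + m))) by nra.
    unfold lam2. rewrite Hq2. field. lra. }
  split; [split; [exact Hl2|split; [exact Hd2|exact Huniq2]]|].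
  assert (HCp : 0 < CSR) by lra.
  unfold lamstar, Rmax. destruct (Rle_dec lam1 lam2) as [h|h].
  - split; [exact Hl2|]. intros l Hl.
    assert (Hf2 : f2 b m c lam2 <= lam2 * CSR).
    { destruct (Req_dec lam1 lam2) as [e|e].
      - rewrite <- e. lra.
      - pose proof (Hsgt lam2 Hl2 ltac:(lra)). lra. }
    rewrite (Rmin_right _ _ Hf2).
    pose proof (tangent b m c l lam2 Hm Hc Hl Hl2). rewrite HX2, HD2 in H.
    pose proof (Rmin_r (l * CSR) (f2 b m c l)). lra.
  - split; [exact Hl1|]. intros l Hl.
    rewrite (Rmin_left _ _ (Req_le _ _ Heq1)).
    destruct (Rle_dec l lam1) as [h'|h'].
    + pose proof (Rmin_l (l * CSR) (f2 b m c l)).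
      assert (l * CSR <= lam1 * CSR) by (apply Rmult_le_compat_r; lra). lra.
    + pose proof (tangent b m c l lam1 Hm Hc Hl Hl1).
      pose proof (Xf_mono m c lam2 lam1 Hc (proj1 Hl2) ltac:(lra) (proj2 Hl1)).
      rewrite HX2 in H0.
      pose proof (Dx_mono b m c _ _ Hm Hc HEm H0). rewrite HD2 in H1.
      assert (Dx b m c (Xf m c lam1) * (l - lam1) <= 0).
      { apply Rmult_le_0_r; lra. } 
      pose proof (Rmin_r (l * CSR) (f2 b m c l)). lra.
Qed.

Theorem theorem2 (PS HSR HSD HRD sR2 sD2 eta : R) :
  0 < PS -> 0 < HSR -> 0 < HSD -> 0 < HRD -> 0 < sR2 -> 0 < sD2 ->
  0 < eta <= 1 ->
  let CSR := ln (1 + PS * HSR / sR2) in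
  let m := PS * HSD / sD2 in
  let b := ln (1 + m) in
  let a := CSR - b in
  let c := eta * HSR * HRD * PS / sD2 in
  0 < a ->
  let W1 := LambertWm1 (- (a / c) * exp (- (a * (1 + m) / c))) in
  let lam1 := (- (1 / a) * W1 - (1 + m) / c) / (1 - (1 / a) * W1 - (1 + m) / c) in
  let E := exp (LambertW0 ((c - (1 + m)) / exp (1 + b)) + b + 1) in
  let lam2 := (E - (1 + m)) / (E + c - (1 + m)) in
  let lamstar := Rmax lam1 lam2 in
  (* (i) *)
  (0 < lam1 < 1 /\ lam1 * CSR = f2 b m c lam1 /\
   forall l, 0 < l < 1 -> l * CSR = f2 b m c l -> l = lam1) /\
  (* (ii) *)
  (0 < lam2 < 1 /\ derivable_pt_lim (f2 b m c) lam2 0 /\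
   forall l, 0 < l < 1 -> derivable_pt_lim (f2 b m c) l 0 -> l = lam2) /\
  (* (iii) *)
  (0 < lamstar < 1 /\
   forall l, 0 < l < 1 ->
     Rmin (l * CSR) (f2 b m c l) <= Rmin (lamstar * CSR) (f2 b m c lamstar)).
Proof.
  intros HPS HSRp HSDp HRDp HsR HsD Heta CSR m b a c Ha.
  assert (Hm : 0 < m).
  { unfold m. apply Rdiv_lt_0_compat; [apply Rmult_lt_0_compat|]; lra. }
  assert (Hc : 0 < c).
  { unfold c. apply Rdiv_lt_0_compat; [|lra].
    repeat apply Rmult_lt_0_compat; lra. }
  exact (main CSR m b a c Hm Hc eq_refl eq_refl Ha).
Qed.
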